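(* In a dynamic network congestion game, a strategy profile is a subgame-perfect equilibrium if, and only if, it is a very-weak subgame-perfect equilibrium.
   Context: An arena is $\mathcal A=(V,E,\mathsf{src},\mathsf{tgt})$ with $V$ finite, $E$ a partial function from $V\times V$ to non-decreasing piecewise-affine functions $\mathbb N\to\mathbb N$ (edge $e$ has cost function $\ell_e$); $\mathsf{tgt}$ has only a self-loop of constant cost $0$ and is reachable from every state. In the dynamic NCG $(\mathcal A,n)$, players $[n]$ start in $\mathsf{src}$; configurations are maps $[n]\to V$; in each step each player simultaneously picks an edge leaving their current state, moves along it and pays $\ell_e(u)$, $u$ being the number of players using edge $e$ in that step. A history is a finite sequence of such steps; a strategy maps histories to edges leaving the player's current state. For a profile $\sigma$ and a history $h$, the residual profile $\sigma^h$ (played from the last configuration of $h$) is given by $\sigma^h_i(h')=\sigma_i(h\cdot h')$; $\mathrm{cost}_i$ of a profile is player $i$'s total payment along its outcome until reaching $\mathsf{tgt}$ ($+\infty$ if never). A Nash equilibrium is a profile in which no player can lower their cost by a unilateral change of strategy; a subgame-perfect equilibrium is a profile $\sigma$ such that $\sigma^h$ is a Nash equilibrium for every history $h$. A strategy $\sigma'_i$ is first-shot deviating from $\sigma_i$ if they coincide on all histories except the empty (trivial) history. A profile $\sigma$ is a very-weak Nash equilibrium if for every player $i$ and every $\sigma'_i$ first-shot deviating from $\sigma_i$, $\mathrm{cost}_i(\langle\sigma_{-i},\sigma'_i\rangle)\ge\mathrm{cost}_i(\sigma)$. A very-weak subgame-perfect equilibrium is a profile $\sigma$ such that $\sigma^h$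 is a very-weak Nash equilibrium for every history $h$. *)

(* Defs.v *)
From mathcomp Require Import all_boot all_order all_algebra.
From Stdlib Require Import ClassicalEpsilon.
Set Implicit Arguments. Unset Strict Implicit. Unset Printing Implicit Defensive.
Import GRing.Theory Num.Theory.

Section NCG.
Variable V : finType.
(* E u v = Some l : there is an edge (u,v) with cost function l. *)
Variable E : V -> V -> option (nat -> nat).
Variables src tgt : V.

Definition nondecreasing_fun (f : nat -> nat) : Prop :=
  forall x y, (x <= y)%N -> (f x <= f y)%N.

(* Piecewise affine with finitely many pieces: the breakpoints s cut N into
   finitely many intervals; on the k-th interval f is x |-> a k * x + b k. *)
Definition piecewise_affine (f : nat -> nat) : Prop :=
  exists (s : seq nat) (a b : nat -> int),
    forall x : nat, let k := count (fun t => (t <= x)%N) s in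
      ((f x)%:Z = a k * x%:Z + b k)%R.

Definition edge_rel : rel V := fun u v => E u v.

Definition is_arena : Prop :=
  (forall u v l, E u v = Some l -> nondecreasing_fun l /\ piecewise_affine l) /\
  (forall v, isSome (E tgt v) = (v == tgt)) /\
  (exists l, E tgt tgt = Some l /\ forall x, l x = 0%N) /\
  (forall u, connect edge_rel u tgt).

Variable n : nat.

Definition edge := (V * V)%type.
Definition is_edge (e : edge) : bool := isSome (E e.1 e.2).
Definition config := {ffun 'I_n -> V}.
Definition step := {ffun 'I_n -> edge}.
Definition history := seq step.

Definition after_step (s : step) : config := [ffun i => (s i).2].
Definition cur (c : config) (h : history) : config :=
  foldl (fun _ s => after_step s) c h.

Definition valid_step (c : config) (s : step) : Prop :=
  forall i, (s i).1 = c i /\ is_edge (s i).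

Fixpoint valid_hist (c : config) (h : history) : Prop :=
  match h with
  | [::] => True
  | s :: h' => valid_step c s /\ valid_hist (after_step s) h'
  end.

Definition strategy := history -> edge.
Definition profile := 'I_n -> strategy.

Definition valid_strategy (c : config) (i : 'I_n) (st : strategy) : Prop :=
  forall h, valid_hist c h -> (st h).1 = cur c h i /\ is_edge (st h).

Definition valid_profile (c : config) (sg : profile) : Prop :=
  forall i, valid_strategy c i (sg i).

Definition upd (sg : profile) (i : 'I_n) (st : strategy) : profile :=
  fun j => if j == i then st else sg j.

Definition residual (sg : profile) (h : history) : profile :=
  fun i h' => sg i (h ++ h').

Definition next_step (sg : profile) (h : history) : step := [ffun i => sg i h].

Fixpoint play (sg : profile) (k : nat) : history :=
  match k with
  | 0 => [::]
  | k'.+1 => rcons (play sg k') (next_step sg (play sg k'))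
  end.

Definition load (s : step) (e : edge) : nat := #|[set j | s j == e]|.

Definition pay (sg : profile) (i : 'I_n) (k : nat) : nat :=
  let s := next_step sg (play sg k) in
  match E (s i).1 (s i).2 with
  | Some l => l (load s (s i))
  | None => 0%N
  end.

Definition reached (c : config) (sg : profile) (i : 'I_n) : pred nat :=
  fun k => cur c (play sg k) i == tgt.

(* None stands for +infinity *)
Definition cost (c : config) (sg : profile) (i : 'I_n) : option nat :=
  match excluded_middle_informative (exists k, reached c sg i k) with
  | left H => Some (\sum_(k < ex_minn H) pay sg i k)%N
  | right _ => None
  end.

Definition cost_le (x y : option nat) : Prop :=
  match y, x with
  | None, _ => True
  | Some b, Some a => (a <= b)%N
  | Some _, None => False
  end.

Definition is_NE (c : config) (sg : profile) : Prop :=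
  forall i st, valid_strategy c i st -> cost_le (cost c sg i) (cost c (upd sg i st) i).

Definition first_shot_deviating (c : config) (st' st : strategy) : Prop :=
  forall h, valid_hist c h -> h <> [::] -> st' h = st h.

Definition is_vwNE (c : config) (sg : profile) : Prop :=
  forall i st, valid_strategy c i st -> first_shot_deviating c st (sg i) ->
    cost_le (cost c sg i) (cost c (upd sg i st) i).

Definition src_config : config := [ffun _ => src].

Definition is_SPE (sg : profile) : Prop :=
  forall h, valid_hist src_config h -> is_NE (cur src_config h) (residual sg h).

Definition is_vwSPE (sg : profile) : Prop :=
  forall h, valid_hist src_config h -> is_vwNE (cur src_config h) (residual sg h).

End NCG.

(* Main.v *)
Require Import Defs.
From mathcomp Require Import all_boot all_order all_algebra.
From Stdlib Require Import ClassicalEpsilon FunctionalExtensionality.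
Set Implicit Arguments. Unset Strict Implicit. Unset Printing Implicit Defensive.

Section Proof.
Variables (V : finType) (E : V -> V -> option (nat -> nat)) (src tgt : V) (n : nat).

Lemma costE (c : config V n) (P : profile V n) i m :
  reached tgt c P i m -> (forall k, k < m -> ~~ reached tgt c P i k) ->
  cost E tgt c P i = Some (\sum_(k < m) pay E P i k)%N.
Proof.
move=> Hm Hmin; rewrite /cost.
case: excluded_middle_informative => [H|H]; last by exfalso; apply: H; exists m.
case: ex_minnP => m' Hm' Hmin'.
have -> : m' = m; last by [].
apply/eqP; rewrite eqn_leq Hmin' //= leqNgt; apply/negP => /Hmin.
by rewrite Hm'.
Qed.

Lemma costN (c : config V n) (P : profile V n) i :
  (forall k, ~~ reached tgt c P i k) -> cost E tgt c P i = None.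
Proof.
move=> H; rewrite /cost; case: excluded_middle_informative => [[k Hk]|] //.
by have := H k; rewrite Hk.
Qed.

Lemma play_residual (P : profile V n) k :
  play P k.+1 = next_step P [::] :: play (residual P [:: next_step P [::]]) k.
Proof.
elim: k => [|k IH] //.
have -> : play P k.+2 = rcons (play P k.+1) (next_step P (play P k.+1)) by [].
by rewrite IH rcons_cons /=; congr (_ :: _); congr rcons.
Qed.

Lemma next_step_res (P : profile V n) k :
  next_step P (play P k.+1) =
  next_step (residual P [:: next_step P [::]]) (play (residual P [:: next_step P [::]]) k).
Proof. by rewrite play_residual; apply/ffunP => j; rewrite !ffunE. Qed.

Lemma pay_res (P : profile V n) i k :
  pay E P i k.+1 = pay E (residual P [:: next_step P [::]]) i k.
Proof. by rewrite /pay next_step_res. Qed.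

Lemma reached_res (c : config V n) (P : profile V n) i k :
  reached tgt c P i k.+1 =
  reached tgt (after_step (next_step P [::])) (residual P [:: next_step P [::]]) i k.
Proof. by rewrite /reached play_residual. Qed.

Lemma cost_step (c : config V n) (P : profile V n) i :
  c i != tgt ->
  cost E tgt c P i = omap (addn (pay E P i 0))
    (cost E tgt (after_step (next_step P [::])) (residual P [:: next_step P [::]]) i).
Proof.
move=> Hci.
have H0 : ~~ reached tgt c P i 0 by rewrite /reached.
case: (excluded_middle_informative
   (exists k, reached tgt (after_step (next_step P [::])) (residual P [:: next_step P [::]]) i k)) => [Hex|Hno].
- case: (ex_minnP Hex) => m Hm Hmin.
  have Hmin2 : forall k, k < m -> ~~ reached tgt (after_step (next_step P [::]))
                 (residual P [:: next_step P [::]]) i k.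
    move=> k Hk; apply/negP => /Hmin; by rewrite leqNgt Hk.
  rewrite (costE Hm Hmin2) (@costE _ _ _ m.+1); last first.
  + case => // k; rewrite ltnS reached_res; exact: Hmin2.
  + by rewrite reached_res.
  rewrite /= big_ord_recl; congr (Some (_ + _)); apply: eq_bigr => k _.
  by rewrite pay_res.
- rewrite !costN //.
  + move=> k; apply/negP => Hk; apply: Hno; by exists k.
  + case => // k; rewrite reached_res; apply/negP => Hk; apply: Hno; by exists k.
Qed.

Lemma cur_cat (c : config V n) g h : cur c (g ++ h) = cur (cur c g) h.
Proof. by rewrite /cur foldl_cat. Qed.

Lemma valid_hist_cat (c : config V n) g h :
  valid_hist E c (g ++ h) <-> valid_hist E c g /\ valid_hist E (cur c g) h.
Proof.
elim: g c => [|s g IH] c /=; first by tauto.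
rewrite IH; tauto.
Qed.

Lemma cost_le_trans x y z : cost_le x y -> cost_le y z -> cost_le x z.
Proof.
by case: z => [z|] //; case: y => [y|] //; case: x => [x|] //= ; apply: leq_trans.
Qed.

Lemma cost_le_omap a x y : cost_le x y -> cost_le (omap (addn a) x) (omap (addn a) y).
Proof. by case: y => [y|] //; case: x => [x|] //=; rewrite leq_add2l. Qed.

Variable sg : profile V n.
Hypothesis Hsg : valid_profile E (src_config src n) sg.
Hypothesis Hvw : is_vwSPE E src tgt sg.

Lemma key m : forall g, valid_hist E (src_config src n) g ->
  forall i st, valid_strategy E (cur (src_config src n) g) i st ->
  reached tgt (cur (src_config src n) g) (upd (residual sg g) i st) i m ->
  cost_le (cost E tgt (cur (src_config src n) g) (residual sg g) i)
          (cost E tgt (cur (src_config src n) g) (upd (residual sg g) i st) i).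
Proof.
elim: m => [|m IH] g Hg i st Hst Hr.
  have Hci : cur (src_config src n) g i == tgt by move: Hr; rewrite /reached.
  rewrite (@costE _ _ _ 0) // (@costE _ _ _ 0) // ?big_ord0 //.
set c := cur (src_config src n) g.
case Hci: (c i == tgt).
  rewrite (@costE _ _ _ 0) // (@costE _ _ _ 0) // ?big_ord0 //.
set R := residual sg g.
set D := upd R i st.
set s0 := next_step D [::].
pose st1 : strategy V n := fun h => if h is [::] then st [::] else R i h.
have Hvalid1 : valid_strategy E c i st1.
  case => [|s h] Hh /=; first exact: Hst.
  rewrite /R /residual.
  have Hv : valid_hist E (src_config src n) (g ++ s :: h) by apply/valid_hist_cat.
  by have := Hsg i Hv; rewrite cur_cat.
have Hfs1 : first_shot_deviating E c st1 (R i) by case.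
have H1 := Hvw Hg Hvalid1 Hfs1.
have Hs0 : next_step (upd R i st1) [::] = s0.
  apply/ffunP => j; rewrite /s0 /D !ffunE /upd; by case: eqP.
have Hvs0 : valid_step E c s0.
  move=> j; rewrite /s0 /D ffunE /upd; case: eqP => [->|_]; first exact: Hst.
  rewrite /R /residual cats0; exact: Hsg.
set g' := g ++ [:: s0].
have Hg' : valid_hist E (src_config src n) g' by apply/valid_hist_cat.
have Hc' : cur (src_config src n) g' = after_step s0 by rewrite cur_cat.
have E1 : residual (upd R i st1) [:: s0] = residual sg g'.
  apply: functional_extensionality => j; apply: functional_extensionality => h.
  rewrite /residual /upd /g' -catA; case: eqP => [->|] //.
pose st' : strategy V n := fun h => st (s0 :: h).
have E2 : residual D [:: s0] = upd (residual sg g') i st'.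
  apply: functional_extensionality => j; apply: functional_extensionality => h.
  rewrite /residual /D /R /upd /g'; case: (j == i) => /=; rewrite -?catA //.
have Hst' : valid_strategy E (cur (src_config src n) g') i st'.
  rewrite Hc' => h Hh; exact: (Hst (s0 :: h)).
have Hr' : reached tgt (cur (src_config src n) g') (upd (residual sg g') i st') i m.
  by rewrite Hc' -E2; move: Hr; rewrite reached_res.
have H2 := IH g' Hg' i st' Hst' Hr'.
apply: (cost_le_trans H1).
rewrite (@cost_step c (upd R i st1) i (negbT Hci)) (@cost_step c D i (negbT Hci)).
rewrite Hs0 -/s0 E1 -/D -/s0 E2 -Hc'.
have -> : pay E (upd R i st1) i 0 = pay E D i 0 by rewrite /pay /= Hs0.
exact: cost_le_omap.
Qed.

End Proof.

Theorem theoremC3 (V : finType) (E : V -> V -> option (nat -> nat)) (src tgt : V)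
  (HA : is_arena E tgt) (n : nat) (sg : profile V n)
  (Hsg : valid_profile E (src_config src n) sg) :
  is_SPE E src tgt sg <-> is_vwSPE E src tgt sg.
Proof.
split.
  by move=> H h Hh i st Hst _; apply: H.
move=> Hvw h Hh i st Hst.
case: (excluded_middle_informative (exists k,
  reached tgt (cur (src_config src n) h) (upd (residual sg h) i st) i k)) => [[k Hk]|Hno].
  exact: (key Hsg Hvw Hh Hst Hk).
rewrite (@costN _ E tgt _ _ (upd (residual sg h) i st)); first exact: I.
move=> k; apply/negP => Hk; apply: Hno; by exists k.
Qed.
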